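(* Let $m\ge 2$ be an integer and let $T_m$ be the $m$-th Chebyshev polynomial, viewed as a map $T_m:\mathbb{Z}_2\to\mathbb{Z}_2$. (i) If $m$ is even, then $1$ is an attracting fixed point of $T_m$, and every $x\in\mathbb{Z}_2$ lies in its attracting basin, i.e. $\lim_{k\to\infty}T_m^{k}(x)=1$ for all $x\in\mathbb{Z}_2$. (ii) If $m$ is odd, let $s=s(m)\ge 2$ be as defined in the context. Then $\mathbb{Z}_2$ decomposes as the disjoint union $$\mathbb{Z}_2=\{0,1,-1\}\sqcup E_1\sqcup E_2\sqcup E_3,$$ where $$E_1=\bigsqcup_{n\ge1}\bigsqcup_{0\le i<2^{s-1}}E_1(n,i),\qquad E_2=\bigsqcup_{n\ge2}\bigsqcup_{0\le i<2^{s}}E_2(n,i),\qquad E_3=\bigsqcup_{n\ge2}\bigsqcup_{0\le i<2^{s}}E_3(n,i),$$ with $$E_1(n,i)=2^n(1+2i)+2^{n+s}\mathbb{Z}_2\ (n\ge1,\ 0\le i<2^{s-1}),$$ $$E_2(n,i)=1+2^n(1+2i)+2^{n+s+1}\mathbb{Z}_2\ (n\ge2,\ 0\le i<2^{s}),$$ $$E_3(n,i)=-1+2^n(1+2i)+2^{n+s+1}\mathbb{Z}_2\ (n\ge2,\ 0\le i<2^{s}).$$ The points $0,1,-1$ are fixed points of $T_m$, and each set $E_1(n,i)$, $E_2(n,i)$, $E_3(n,i)$ is invariant under $T_m$ and the restriction of $T_m$ to it is minimal (every orbit in it is dense in it).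
   Context: $\mathbb{Z}_2$ denotes the ring of $2$-adic integers. For an integer $m\ge0$, the $m$-th Chebyshev polynomial is $$T_m(x)=\sum_{k=0}^{\lfloor m/2\rfloor}(-1)^k\frac{m}{m-k}\binom{m-k}{k}2^{m-2k-1}x^{m-2k}.$$ For an odd integer $m\ge3$, define $s(m)=\max\{n\ge2:\ 2^n\mid(m+1)\text{ or }2^n\mid(m-1)\}$; equivalently, $m=2^{s}q+1$ or $m=2^{s}q-1$ with $q\ge1$ odd and $s=s(m)\ge 2$. $T_m^k$ denotes the $k$-th iterate of $T_m$. A continuous map $f:E\to E$ is minimal if every orbit is dense in $E$. *)

(* Defs.v *)
(* 2-adic integers modelled as the inverse limit of Z/2^nZ. *)
From Stdlib Require Import ZArith List Arith Lia.
Open Scope Z_scope.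

Definition pw (n : nat) : Z := 2 ^ Z.of_nat n.

Definition Z2 := nat -> Z.
Definition is_Z2 (x : Z2) : Prop :=
  forall n : nat, 0 <= x n < pw n /\ x (S n) mod pw n = x n.

Definition Z2eq (x y : Z2) : Prop := forall n : nat, x n = y n.

Definition Z2c (z : Z) : Z2 := fun n => z mod pw n.
Definition Z2add (x y : Z2) : Z2 := fun n => (x n + y n) mod pw n.
Definition Z2mul (x y : Z2) : Z2 := fun n => (x n * y n) mod pw n.
Fixpoint Z2pow (x : Z2) (k : nat) : Z2 :=
  match k with O => Z2c 1 | S k' => Z2mul x (Z2pow x k') end.

Fixpoint binom (n k : nat) : nat :=
  match n, k with
  | _, O => 1%nat
  | O, S _ => 0%nat
  | S n', S k' => (binom n' k' + binom n' (S k'))%nat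
  end.

(* coefficient (-1)^k * m/(m-k) * C(m-k,k) * 2^(m-2k-1), computed as an exact
   integer quotient (m * C(m-k,k) * 2^(m-2k)) / (2 (m-k)). *)
Definition cheb_coef (m k : nat) : Z :=
  (-1) ^ Z.of_nat k *
  ((Z.of_nat m * Z.of_nat (binom (m - k) k) * pw (m - 2 * k))
     / (2 * Z.of_nat (m - k))).

Definition cheb (m : nat) (x : Z2) : Z2 :=
  fold_right (fun k acc => Z2add (Z2mul (Z2c (cheb_coef m k)) (Z2pow x (m - 2 * k))) acc)
             (Z2c 0) (seq 0 (S (Nat.div2 m))).

Definition cheb_deriv_at (m : nat) (z : Z) : Z :=
  fold_right (fun k acc => cheb_coef m k * Z.of_nat (m - 2 * k) * z ^ Z.of_nat (m - 2 * k - 1) + acc)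
             0 (seq 0 (S (Nat.div2 m))).

Definition iter (k : nat) (f : Z2 -> Z2) (x : Z2) : Z2 := Nat.iter k f x.

Definition in_coset (a : Z) (N : nat) (x : Z2) : Prop :=
  exists y : Z2, is_Z2 y /\ Z2eq x (Z2add (Z2c a) (Z2mul (Z2c (pw N)) y)).

Definition is_s (m s : nat) : Prop :=
  (2 <= s)%nat /\
  ((pw s | Z.of_nat m + 1) \/ (pw s | Z.of_nat m - 1)) /\
  (forall n : nat, (2 <= n)%nat ->
     ((pw n | Z.of_nat m + 1) \/ (pw n | Z.of_nat m - 1)) -> (n <= s)%nat).

Inductive piece : Type :=
| Pt0 | Pt1 | PtM1
| E1 (n i : nat) | E2 (n i : nat) | E3 (n i : nat).

Definition piece_valid (s : nat) (p : piece) : Prop :=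
  match p with
  | Pt0 | Pt1 | PtM1 => True
  | E1 n i => (1 <= n)%nat /\ (i < 2 ^ (s - 1))%nat
  | E2 n i => (2 <= n)%nat /\ (i < 2 ^ s)%nat
  | E3 n i => (2 <= n)%nat /\ (i < 2 ^ s)%nat
  end.

Definition in_piece (s : nat) (p : piece) (x : Z2) : Prop :=
  match p with
  | Pt0 => Z2eq x (Z2c 0)
  | Pt1 => Z2eq x (Z2c 1)
  | PtM1 => Z2eq x (Z2c (-1))
  | E1 n i => in_coset (pw n * (1 + 2 * Z.of_nat i)) (n + s) x
  | E2 n i => in_coset (1 + pw n * (1 + 2 * Z.of_nat i)) (n + s + 1) x
  | E3 n i => in_coset (-1 + pw n * (1 + 2 * Z.of_nat i)) (n + s + 1) x
  end.

(* f maps E into E and every orbit of a point of E is dense in E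
   (density in the 2-adic topology: approximation modulo every 2^N). *)
Definition invariant (f : Z2 -> Z2) (E : Z2 -> Prop) : Prop :=
  forall x, is_Z2 x -> E x -> E (f x).
Definition minimal_on (f : Z2 -> Z2) (E : Z2 -> Prop) : Prop :=
  forall x y, is_Z2 x -> is_Z2 y -> E x -> E y ->
    forall N : nat, exists k : nat, iter k f x N = y N.

Definition converges_to (f : Z2 -> Z2) (x a : Z2) : Prop :=
  forall N : nat, exists K : nat, forall k : nat, (K <= k)%nat -> iter k f x N = a N.

(* Main.v *)
Require Import Defs.
From Stdlib Require Import ZArith List Arith.
From Stdlib Require Import Znumtheory Lia Classical.
Open Scope Z_scope.

Lemma pw_pos n : 0 < pw n.
Proof. unfold pw. apply Z.pow_pos_nonneg; lia. Qed.
Lemma pw_add a b : pw (a + b) = pw a * pw b.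
Proof. unfold pw. rewrite Nat2Z.inj_add. apply Z.pow_add_r; lia. Qed.
Lemma pw_S n : pw (S n) = 2 * pw n.
Proof. unfold pw. rewrite Nat2Z.inj_succ. rewrite Z.pow_succ_r; lia. Qed.
Lemma pw_0 : pw 0 = 1. Proof. reflexivity. Qed.
Lemma pw_nat n : Z.of_nat (2 ^ n) = pw n.
Proof. unfold pw. rewrite Nat2Z.inj_pow. reflexivity. Qed.
Lemma pw_le_div a b : (a <= b)%nat -> (pw a | pw b).
Proof. intros H. replace b with (a + (b - a))%nat by lia. rewrite pw_add.
  exists (pw (b-a)). ring. Qed.

Lemma mod_of_div p a b : (p | a - b) -> a mod p = b mod p.
Proof. intros [c Hc]. replace a with (b + c * p) by lia. apply Z_mod_plus_full. Qed.
Lemma div_of_mod p a b : p <> 0 -> a mod p = b mod p -> (p | a - b).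
Proof. intros Hp H. rewrite (Z.div_mod a p Hp), (Z.div_mod b p Hp). rewrite H.
  exists (a / p - b / p). ring. Qed.
Lemma div_mod_self p a : p <> 0 -> (p | a - a mod p).
Proof. intros Hp. apply div_of_mod; auto. rewrite Z.mod_mod; auto. Qed.

Definition Tay (f df : Z -> Z) : Prop :=
  forall x h, exists r, f (x + h) = f x + h * df x + h * h * r.

Lemma Tay_div f df : Tay f df -> forall x y, (y - x | f y - f x).
Proof. intros H x y. destruct (H x (y - x)) as [r Hr].
  replace (x + (y - x)) with y in Hr by ring. exists (df x + (y - x) * r). rewrite Hr. ring. Qed.
Lemma Tay_cong f df : Tay f df -> forall p x y, (p | y - x) -> (p | f y - f x).
Proof. intros. eapply Z.divide_trans; [eassumption|apply (Tay_div f df); auto]. Qed.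

Lemma Tay_comp f df u du : Tay f df -> Tay u du ->
  Tay (fun x => f (u x)) (fun x => df (u x) * du x).
Proof. intros Hf Hu x h. destruct (Hu x h) as [r1 Hr1].
  destruct (Hf (u x) (h * du x + h * h * r1)) as [r2 Hr2].
  exists (r1 * df (u x) + (du x + h * r1) * (du x + h * r1) * r2).
  assert (E : u (x + h) = u x + (h * du x + h * h * r1)) by (rewrite Hr1; ring).
  rewrite E, Hr2. ring. Qed.

Lemma Tay_ext f df f' df' : (forall x, f x = f' x) -> (forall x, df x = df' x) ->
  Tay f df -> Tay f' df'.
Proof. intros E1 E2 H x h. destruct (H x h) as [r Hr]. exists r.
  rewrite <- !E1, <- E2. auto. Qed.
Lemma Tay_id : Tay (fun x => x) (fun _ => 1).
Proof. intros x h. exists 0. ring. Qed.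
Lemma Tay_const c : Tay (fun _ => c) (fun _ => 0).
Proof. intros x h. exists 0. ring. Qed.
Lemma Tay_add f df g dg : Tay f df -> Tay g dg ->
  Tay (fun x => f x + g x) (fun x => df x + dg x).
Proof. intros Hf Hg x h. destruct (Hf x h) as [r1 H1]. destruct (Hg x h) as [r2 H2].
  exists (r1 + r2). rewrite H1, H2. ring. Qed.
Lemma Tay_mul f df g dg : Tay f df -> Tay g dg ->
  Tay (fun x => f x * g x) (fun x => df x * g x + f x * dg x).
Proof. intros Hf Hg x h. destruct (Hf x h) as [r1 H1]. destruct (Hg x h) as [r2 H2].
  exists (r1 * g x + f x * r2 + df x * dg x + h * (df x * r2 + r1 * dg x) + h * h * r1 * r2).
  rewrite H1, H2. ring. Qed.

Lemma iter_0 {A} (f : A -> A) x : Nat.iter 0 f x = x. Proof. reflexivity. Qed.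
Lemma iter_S {A} (f : A -> A) k x : Nat.iter (S k) f x = f (Nat.iter k f x). Proof. reflexivity. Qed.

Definition one4 (d : Z -> Z) := forall x, exists e, d x = 1 + 4 * e.

Lemma Tay_iter g dg : Tay g dg -> one4 dg ->
  forall k, exists dk, Tay (Nat.iter k g) dk /\ one4 dk.
Proof. intros Hg Hd k. induction k as [|k [dk [Hk Hk1]]].
  - exists (fun _ => 1). split. apply Tay_id. intros x. exists 0. ring.
  - exists (fun x => dg (Nat.iter k g x) * dk x). split.
    + exact (Tay_comp g dg (Nat.iter k g) dk Hg Hk).
    + intros x. destruct (Hd (Nat.iter k g x)) as [e1 E1]. destruct (Hk1 x) as [e2 E2].
      exists (e1 + e2 + 4 * e1 * e2). rewrite E1, E2. ring. Qed.

Lemma iter_cong g dg : Tay g dg -> forall k p x y, (p | y - x) ->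
  (p | Nat.iter k g y - Nat.iter k g x).
Proof. intros Hg k. induction k; intros p x y H; simpl; auto.
  apply (Tay_cong g dg Hg). auto. Qed.

Definition Qp (g : Z -> Z) (N : nat) :=
  forall t, exists o, Nat.iter (2 ^ N) g t = t + pw N * (2 * o + 1).

Lemma Q_step g dg : Tay g dg -> one4 dg -> forall N, (2 <= N)%nat -> Qp g N -> Qp g (S N).
Proof. intros Hg Hd N HN HQ t.
  destruct (Tay_iter g dg Hg Hd (2 ^ N)) as [dG [HG HG1]].
  destruct (HQ t) as [o Ho].
  destruct (HG t (pw N * (2 * o + 1))) as [r Hr].
  destruct (HG1 t) as [e He].
  replace (2 ^ S N)%nat with (2 ^ N + 2 ^ N)%nat by (simpl; lia).
  rewrite Nat.iter_add. rewrite Ho. rewrite Hr. rewrite Ho, He.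
  replace N with (S (S (N - 2))) by lia. rewrite !pw_S.
  set (P := pw (N - 2)).
  clearbody P. exists (o + (2*o+1) * e + P * (2*o+1)*(2*o+1) * r). ring. Qed.

Lemma iter_approx g c l : (forall t, exists w, g t = c + (1 + 4 * l) * t + 8 * w) ->
  forall k t, exists w, Nat.iter k g t = Nat.iter k (fun x => c + (1 + 4 * l) * x) t + 8 * w.
Proof. intros H k. induction k; intros t.
  - exists 0. rewrite !iter_0. ring.
  - destruct (IHk t) as [w Hw]. rewrite !iter_S. rewrite Hw.
    destruct (H (Nat.iter k (fun x => c + (1 + 4 * l) * x) t + 8 * w)) as [w' Hw'].
    rewrite Hw'. exists ((1 + 4*l) * w + w'). ring. Qed.

Lemma Q_base g c1 l : (forall t, exists w, g t = (2 * c1 + 1) + (1 + 4 * l) * t + 8 * w) ->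
  Qp g 0 /\ Qp g 1 /\ Qp g 2.
Proof. intros H.
  pose proof (iter_approx g (2*c1+1) l H) as HA.
  split; [|split]; intros t.
  - destruct (HA 1%nat t) as [w Hw]. change (2^0)%nat with 1%nat. rewrite !iter_S, !iter_0 in *. rewrite Hw.
    exists (c1 + 2 * l * t + 4 * w). try change (pw 0) with 1; try change (pw 1) with 2; try change (pw 2) with 4. ring.
  - destruct (HA 2%nat t) as [w Hw]. change (2^1)%nat with 2%nat. rewrite !iter_S, !iter_0 in *. rewrite Hw.
    exists (c1 + l + 2 * c1 * l + (2 * l + 4 * l * l) * t + 2 * w). try change (pw 0) with 1; try change (pw 1) with 2; try change (pw 2) with 4. ring.
  - destruct (HA 4%nat t) as [w Hw]. change (2^2)%nat with 4%nat. rewrite !iter_S, !iter_0 in *. rewrite Hw.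
    set (Y := c1 + l + 2 * c1 * l).
    set (X := 2*l + 4*l*l + Y + 4*Y*l + 8*Y*l*l).
    set (Zz := (l + 2*l*l)*(1 + 4*l + 8*l*l)).
    exists (X + 2 * Zz * t + w). try change (pw 0) with 1; try change (pw 1) with 2; try change (pw 2) with 4. unfold X, Y, Zz. ring. Qed.

Lemma Q_all g dg c1 l : Tay g dg -> one4 dg ->
  (forall t, exists w, g t = (2 * c1 + 1) + (1 + 4 * l) * t + 8 * w) -> forall N, Qp g N.
Proof. intros Hg Hd H. destruct (Q_base g c1 l H) as [Q0 [Q1 Q2]].
  intros N. induction N as [|N IH]; auto. destruct N as [|N]; auto. destruct N as [|N]; auto.
  apply (Q_step g dg Hg Hd); auto. lia. Qed.

Lemma distinct g dg : Tay g dg -> (forall N, Qp g N) ->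
  forall N t j, (0 < j < 2 ^ N)%nat -> ~ (pw N | Nat.iter j g t - t).
Proof. intros Hg HQ N. induction N as [|N IH]; intros t j Hj Hd.
  - simpl in Hj. lia.
  - assert (HP : (pw N | pw (S N))) by (rewrite pw_S; exists 2; ring).
    destruct (Nat.lt_ge_cases j (2 ^ N)) as [Hlt|Hge].
    + apply (IH t j); [lia|]. eapply Z.divide_trans; eauto.
    + assert (Hj2 : (j < 2 ^ N + 2 ^ N)%nat) by (simpl in Hj; lia).
      set (r := (j - 2 ^ N)%nat).
      assert (Ej : j = (r + 2 ^ N)%nat) by (unfold r; lia).
      destruct (HQ N t) as [o Ho].
      rewrite Ej, Nat.iter_add, Ho in Hd.
      destruct (Nat.eq_dec r 0) as [Hr0|Hr0].
      * rewrite Hr0 in Hd. rewrite iter_0 in Hd.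
        replace (t + pw N * (2 * o + 1) - t) with (pw N * (2 * o + 1)) in Hd by ring.
        rewrite pw_S in Hd. destruct Hd as [c Hc].
        pose proof (pw_pos N).
        assert (2 * o + 1 = c * 2) by nia. lia.
      * apply (IH t r); [unfold r; lia|].
        assert (H1 : (pw N | Nat.iter r g (t + pw N * (2 * o + 1)) - Nat.iter r g t)).
        { apply (iter_cong g dg Hg). exists (2*o+1). ring. }
        assert (H2 : (pw N | Nat.iter r g (t + pw N * (2 * o + 1)) - t)) by (eapply Z.divide_trans; [exact HP| exact Hd]).
        replace (Nat.iter r g t - t) with ((Nat.iter r g (t + pw N * (2 * o + 1)) - t)
           - (Nat.iter r g (t + pw N * (2 * o + 1)) - Nat.iter r g t)) by ring.
        apply Z.divide_sub_r; auto. Qed.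

Lemma surj g dg : Tay g dg -> (forall N, Qp g N) ->
  forall N t t', exists k, (pw N | Nat.iter k g t - t').
Proof. intros Hg HQ N t t'.
  pose proof (pw_pos N) as HP.
  set (l := map (fun j => Nat.iter j g t mod pw N) (seq 0 (2 ^ N))).
  set (l' := map Z.of_nat (seq 0 (2 ^ N))).
  assert (Hnd : NoDup l).
  { unfold l. apply NoDup_map_NoDup_ForallPairs; [|apply seq_NoDup].
    intros a b Ha Hb Hab. apply in_seq in Ha. apply in_seq in Hb.
    destruct (Nat.lt_total a b) as [H|[H|H]]; auto; exfalso.
    - apply (distinct g dg Hg HQ N (Nat.iter a g t) (b - a)); [lia|].
      rewrite <- Nat.iter_add. replace (b - a + a)%nat with b by lia.
      apply div_of_mod; lia.
    - apply (distinct g dg Hg HQ N (Nat.iter b g t) (a - b)); [lia|].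
      rewrite <- Nat.iter_add. replace (a - b + b)%nat with a by lia.
      apply div_of_mod; lia. }
  assert (Hinc : incl l l').
  { unfold l, l'. intros z Hz. apply in_map_iff in Hz. destruct Hz as [j [Hj _]].
    apply in_map_iff. exists (Z.to_nat z). split.
    - rewrite Z2Nat.id; auto. subst z. apply Z.mod_pos_bound; lia.
    - apply in_seq. subst z. pose proof (Z.mod_pos_bound (Nat.iter j g t) (pw N) HP).
      rewrite <- pw_nat in *. lia. }
  assert (Hlen : (length l' <= length l)%nat) by (unfold l, l'; rewrite !length_map; lia).
  pose proof (NoDup_length_incl Hnd Hlen Hinc) as Hinc'.
  assert (Hin : In (t' mod pw N) l').
  { unfold l'. apply in_map_iff. exists (Z.to_nat (t' mod pw N)). split.
    - rewrite Z2Nat.id; auto. apply Z.mod_pos_bound; lia.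
    - apply in_seq. pose proof (Z.mod_pos_bound t' (pw N) HP). rewrite <- pw_nat in *. lia. }
  apply Hinc' in Hin. unfold l in Hin. apply in_map_iff in Hin. destruct Hin as [k [Hk _]].
  exists k. apply div_of_mod; lia. Qed.

(* conjugated dynamics on a coset *)
Lemma piece_dyn (T dT : Z -> Z) : Tay T dT -> one4 dT ->
  forall a K, (3 <= K)%nat -> (exists o, T a - a = pw K * (2 * o + 1)) ->
  (forall x, (pw K | x - a) -> (pw K | T x - a)) /\
  (forall X Y L, (pw K | X - a) -> (pw K | Y - a) -> exists k, (pw L | Nat.iter k T X - Y)).
Proof. intros HT Hd a K HK [o Ho].
  pose proof (pw_pos K) as HP.
  assert (Hinv : forall x, (pw K | x - a) -> (pw K | T x - a)).
  { intros x Hx. replace (T x - a) with ((T x - T a) + (T a - a)) by ring.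
    apply Z.divide_add_r; [apply (Tay_cong T dT HT); auto| exists (2*o+1); rewrite Ho; ring]. }
  split; auto.
  set (P := pw K) in *.
  set (g := fun t => (T (a + P * t) - a) / P).
  assert (Hg : forall t, T (a + P * t) = a + P * g t).
  { intros t. unfold g. destruct (Hinv (a + P * t)) as [c Hc]; [exists t; ring|].
    rewrite Hc. rewrite Z.div_mul by lia. lia. }
  assert (HTg : Tay g (fun t => dT (a + P * t))).
  { intros t h. destruct (HT (a + P * t) (P * h)) as [r Hr].
    replace (a + P * t + P * h) with (a + P * (t + h)) in Hr by ring.
    rewrite !Hg in Hr. exists (P * r). apply (Z.mul_reg_l _ _ P); [lia|]. nia. }
  assert (Hd' : one4 (fun t => dT (a + P * t))) by (intros t; apply Hd).
  destruct (Hd a) as [e He].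
  assert (Happ : forall t, exists w, g t = (2 * o + 1) + (1 + 4 * e) * t + 8 * w).
  { intros t. destruct (HT a (P * t)) as [r Hr]. rewrite Hg in Hr.
    assert (HK3 : P = 8 * pw (K - 3)).
    { unfold P. replace K with (3 + (K - 3))%nat at 1 by lia. rewrite pw_add. reflexivity. }
    exists (pw (K - 3) * t * t * r). apply (Z.mul_reg_l _ _ P); [lia|].
    rewrite He in Hr. rewrite HK3 in *. nia. }
  pose proof (Q_all g _ o e HTg Hd' Happ) as HQ.
  assert (Hconj : forall k t, Nat.iter k T (a + P * t) = a + P * Nat.iter k g t).
  { intros k. induction k; intros t; [reflexivity|]. rewrite !iter_S. rewrite IHk. apply Hg. }
  intros X Y L [t Ht] [t' Ht'].
  destruct (surj g _ HTg HQ L t t') as [k Hk]. exists k.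
  replace X with (a + P * t) by lia. replace Y with (a + P * t') by lia.
  rewrite Hconj. replace (a + P * Nat.iter k g t - (a + P * t')) with (P * (Nat.iter k g t - t')) by ring.
  apply Z.divide_mul_r. auto.
Qed.

Fixpoint TV (x : Z) (k : nat) : Z * Z :=
  match k with
  | O => (1, 0)
  | S k' => let (t, v) := TV x k' in (x * t + (x * x - 1) * v, t + x * v)
  end.
Definition Tc (k : nat) (x : Z) : Z := fst (TV x k).
Definition Vc (k : nat) (x : Z) : Z := snd (TV x k).

Lemma Tc_0 x : Tc 0 x = 1. Proof. reflexivity. Qed.
Lemma Vc_0 x : Vc 0 x = 0. Proof. reflexivity. Qed.
Lemma Tc_S k x : Tc (S k) x = x * Tc k x + (x * x - 1) * Vc k x.
Proof. unfold Tc, Vc. simpl. destruct (TV x k). reflexivity. Qed.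
Lemma Vc_S k x : Vc (S k) x = Tc k x + x * Vc k x.
Proof. unfold Tc, Vc. simpl. destruct (TV x k). reflexivity. Qed.

Lemma TV_add a b x : Tc (a + b) x = Tc a x * Tc b x + (x*x-1) * Vc a x * Vc b x /\
                     Vc (a + b) x = Tc a x * Vc b x + Vc a x * Tc b x.
Proof. induction b.
  - rewrite Nat.add_0_r, Tc_0, Vc_0. split; ring.
  - replace (a + S b)%nat with (S (a + b)) by lia. rewrite !Tc_S, !Vc_S. destruct IHb as [H1 H2].
    rewrite H1, H2. split; ring. Qed.

Lemma pell k x : Tc k x * Tc k x - (x*x-1) * Vc k x * Vc k x = 1.
Proof. induction k. rewrite Tc_0, Vc_0. ring. rewrite Tc_S, Vc_S. transitivity (Tc k x * Tc k x - (x*x-1) * Vc k x * Vc k x); [ring|exact IHk]. Qed.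

Lemma Tc_double c x : Tc (2 * c) x = 1 + 2 * (x*x-1) * Vc c x * Vc c x.
Proof. replace (2 * c)%nat with (c + c)%nat by lia. destruct (TV_add c c x) as [H _]. rewrite H.
  pose proof (pell c x). nia. Qed.
Lemma Vc_double c x : Vc (2 * c) x = 2 * Tc c x * Vc c x.
Proof. replace (2 * c)%nat with (c + c)%nat by lia. destruct (TV_add c c x) as [_ H]. rewrite H. ring. Qed.

Lemma Tc_rec k x : Tc (S (S k)) x = 2 * x * Tc (S k) x - Tc k x.
Proof. rewrite !Tc_S, !Vc_S. ring. Qed.

Lemma Tc_pred A x : (1 <= A)%nat -> Tc (A - 1) x = x * Tc A x - (x*x-1) * Vc A x.
Proof. intros H. replace A with (S (A - 1)) at 2 3 by lia. rewrite Tc_S, Vc_S. ring. Qed.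

Fixpoint dVc (k : nat) (x : Z) : Z :=
  match k with
  | O => 0
  | S k' => Z.of_nat k' * Vc k' x + Vc k' x + x * dVc k' x
  end.
Definition dTc (k : nat) (x : Z) : Z := Z.of_nat k * Vc k x.

Lemma dV_id k x : (x*x-1) * dVc k x = Z.of_nat k * Tc k x - x * Vc k x.
Proof. induction k.
  - cbn [dVc]. rewrite Tc_0, Vc_0. simpl. ring.
  - cbn [dVc]. rewrite Nat2Z.inj_succ, Tc_S, Vc_S.
    replace ((x * x - 1) * (Z.of_nat k * Vc k x + Vc k x + x * dVc k x)) with
     ((x*x-1) * (Z.of_nat k * Vc k x + Vc k x) + x * ((x * x - 1) * dVc k x)) by ring.
    rewrite IHk. ring. Qed.

Lemma Tay_TV k : Tay (Tc k) (dTc k) /\ Tay (Vc k) (dVc k).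
Proof. induction k as [|k [IT IV]].
  - split. apply (Tay_ext (fun _ => 1) (fun _ => 0)); [intros; reflexivity| intros; unfold dTc; simpl; ring| apply Tay_const].
    apply (Tay_ext (fun _ => 0) (fun _ => 0)); [intros; reflexivity| intros; reflexivity| apply Tay_const].
  - split.
    + eapply Tay_ext; [intros x; symmetry; apply Tc_S| |].
      2: { apply Tay_add. apply Tay_mul. apply Tay_id. exact IT.
           apply Tay_mul. apply (Tay_add _ _ _ _ (Tay_mul _ _ _ _ Tay_id Tay_id) (Tay_const (-1))). exact IV. }
      intros x. cbv beta. unfold dTc. rewrite Nat2Z.inj_succ, Vc_S.
      replace ((1 * x + x * 1 + 0) * Vc k x + (x * x + -1) * dVc k x) with
        (2 * x * Vc k x + (x * x - 1) * dVc k x) by ring. rewrite dV_id. ring.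
    + eapply Tay_ext; [intros x; symmetry; apply Vc_S| |].
      2: { apply Tay_add. exact IT. apply Tay_mul. apply Tay_id. exact IV. }
      intros x. cbn [dVc]. unfold dTc. ring. Qed.

Lemma Tay_T k : Tay (Tc k) (dTc k). Proof. apply Tay_TV. Qed.

Lemma Vc_4 k x : exists w, Vc (k + 4) x = Vc k x + 4 * w.
Proof. destruct (TV_add k 4 x) as [_ H]. rewrite H.
  repeat (rewrite Tc_S || rewrite Vc_S); rewrite ?Tc_0, ?Vc_0.
  exists (Tc k x * (2*x*x*x - x) + Vc k x * (2*x*x*x*x - 2*x*x)). ring. Qed.

Lemma Vc_mod4 j r x : exists w, Vc (4 * j + r) x = Vc r x + 4 * w.
Proof. induction j. exists 0. simpl. ring.
  destruct IHj as [w Hw]. replace (4 * S j + r)%nat with ((4 * j + r) + 4)%nat by lia.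
  destruct (Vc_4 (4 * j + r) x) as [w' Hw']. rewrite Hw', Hw. exists (w + w'). ring. Qed.

Lemma dTc_one4 m : Nat.odd m = true -> one4 (dTc m).
Proof. intros Hm x. unfold dTc.
  assert (H : exists j, m = (4 * j + 1)%nat \/ m = (4 * j + 3)%nat).
  { apply Nat.odd_spec in Hm. destruct Hm as [h Hh].
    destruct (Nat.Even_or_Odd h) as [[q Hq]|[q Hq]]; exists q; lia. }
  destruct H as [j [E|E]]; subst m.
  - destruct (Vc_mod4 j 1 x) as [w Hw]; rewrite Hw. repeat (rewrite Tc_S || rewrite Vc_S); rewrite ?Tc_0, ?Vc_0. exists (Z.of_nat j + w + 4 * Z.of_nat j * w). replace (Z.of_nat (4*j+1)) with (4 * Z.of_nat j + 1) by lia. ring.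
  - destruct (Vc_mod4 j 3 x) as [w Hw]; rewrite Hw. repeat (rewrite Tc_S || rewrite Vc_S); rewrite ?Tc_0, ?Vc_0.
    set (J := Z.of_nat j). exists (4 * J * x * x - J + 3 * x * x + (4 * J + 3) * w - 1). replace (Z.of_nat (4*j+3)) with (4 * J + 3) by (unfold J; lia). ring. Qed.

Lemma Tc_at1 k : Tc k 1 = 1 /\ Vc k 1 = Z.of_nat k.
Proof. induction k. split; reflexivity. destruct IHk as [H1 H2].
  rewrite Tc_S, Vc_S, H1, H2. split; lia. Qed.

Lemma Tc_odd_0 j : Tc (2 * j + 1) 0 = 0.
Proof. induction j. reflexivity. replace (2 * S j + 1)%nat with (S (S (2 * j + 1))) by lia.
  rewrite Tc_rec, IHj. ring. Qed.

Lemma Tc_m1_S k : Tc (S k) (-1) = - Tc k (-1).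
Proof. rewrite Tc_S. ring. Qed.
Lemma Tc_m1 j : Tc (2 * j) (-1) = 1 /\ Tc (2 * j + 1) (-1) = -1.
Proof. induction j. split; reflexivity. destruct IHj as [H1 H2].
  replace (2 * S j)%nat with (S (2 * j + 1)) by lia.
  replace (S (2 * j + 1) + 1)%nat with (S (S (2 * j + 1))) by lia.
  rewrite !Tc_m1_S, H2. split; ring. Qed.

Lemma Tc_even_odd c x : exists a, Tc (2 * c) x = 2 * a + 1.
Proof. rewrite Tc_double. exists ((x*x-1) * Vc c x * Vc c x). ring. Qed.

Lemma V_pow2 e x : (1 <= e)%nat -> exists o, Vc (2 ^ e) x = pw e * x * (2 * o + 1).
Proof. intros He. induction e. lia. destruct e.
  - exists 0. change (2 ^ 1)%nat with 2%nat. repeat (rewrite Tc_S || rewrite Vc_S). rewrite Tc_0, Vc_0.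
    change (pw 1) with 2. ring.
  - destruct IHe as [o Ho]; [lia|].
    replace (2 ^ S (S e))%nat with (2 * 2 ^ S e)%nat by (simpl; lia).
    rewrite Vc_double, Ho. replace (2 ^ S e)%nat with (2 * 2 ^ e)%nat by (simpl; lia).
    destruct (Tc_even_odd (2 ^ e) x) as [a Ha]. rewrite Ha. rewrite (pw_S (S e)).
    exists (2 * a * o + a + o). ring. Qed.

Lemma V_mult B' x q : exists W w, Vc (q * (2 * B')) x = Vc (2 * B') x * W /\ W = Z.of_nat q + 2 * w.
Proof. induction q.
  - exists 0, 0. split; [rewrite Nat.mul_0_l, Vc_0; ring|reflexivity].
  - destruct IHq as [W [w [H1 H2]]].
    replace (S q * (2 * B'))%nat with (q * (2 * B') + 2 * B')%nat by lia.
    destruct (TV_add (q * (2 * B')) (2 * B') x) as [_ H]. rewrite H, H1.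
    destruct (Tc_even_odd (q * B') x) as [a Ha]. replace (q * (2 * B'))%nat with (2 * (q * B'))%nat by lia.
    rewrite Ha. destruct (Tc_even_odd B' x) as [b Hb]. rewrite Hb.
    exists (2 * a + 1 + W * (2 * b + 1)), (a + w * (2 * b + 1) + Z.of_nat q * b).
    split. ring. rewrite H2, Nat2Z.inj_succ. ring. Qed.

Lemma V_val e q x : (1 <= e)%nat -> Nat.odd q = true -> exists o, Vc (2 ^ e * q) x = pw e * x * (2 * o + 1).
Proof. intros He Hq. destruct (V_pow2 e x He) as [o Ho].
  destruct (V_mult (2 ^ (e - 1)) x q) as [W [w [H1 H2]]].
  replace (2 * 2 ^ (e - 1))%nat with (2 ^ e)%nat in H1 by (destruct e; [lia|simpl; rewrite Nat.sub_0_r; lia]).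
  rewrite Nat.mul_comm, H1, Ho, H2.
  apply Nat.odd_spec in Hq. destruct Hq as [r Hr]. subst q.
  set (R := Z.of_nat r). exists (2 * o * R + o + R + w * (2 * o + 1)). replace (Z.of_nat (2 * r + 1)) with (2 * R + 1) by (unfold R; lia). ring. Qed.

Lemma key_val m s q : (2 <= s)%nat -> Nat.odd q = true ->
  (m = 2 ^ s * q + 1 \/ m + 1 = 2 ^ s * q)%nat ->
  forall x, exists w, Tc m x - x = pw s * x * (x * x - 1) * (2 * w + 1).
Proof. intros Hs Hq Hm x.
  destruct s as [|[|s']]; [lia|lia|].
  set (A := (2 ^ S (S s') * q)%nat).
  assert (EA : A = (2 * (2 ^ S s' * q))%nat) by (unfold A; simpl; lia).
  destruct (V_val (S s') q x) as [O2 H2]; [lia|auto|].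
  destruct (V_val (S (S s')) q x) as [O1 H1]; [lia|auto|].
  assert (HT : Tc A x = 1 + 2 * (x*x-1) * Vc (2 ^ S s' * q) x * Vc (2 ^ S s' * q) x)
    by (rewrite EA; apply Tc_double).
  fold A in H1. rewrite H2 in HT. rewrite !pw_S in *.
  destruct Hm as [Hm|Hm].
  - assert (Em : m = S A) by (unfold A; lia). rewrite Em, Tc_S, HT, H1.
    exists (pw s' * x * x * (2 * O2 + 1) * (2 * O2 + 1) + O1). ring.
  - assert (Em : m = (A - 1)%nat) by (unfold A; lia). rewrite Em, Tc_pred, HT, H1 by (unfold A in *; lia).
    exists (pw s' * x * x * (2 * O2 + 1) * (2 * O2 + 1) - O1 - 1). ring. Qed.

Lemma is_s_form m s : is_s m s -> exists q, Nat.odd q = true /\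
   (m = 2 ^ s * q + 1 \/ m + 1 = 2 ^ s * q)%nat.
Proof. intros [Hs [Hd Hmax]].
  assert (HP := pw_pos s).
  assert (H4 : 4 <= pw s).
  { replace s with (2 + (s - 2))%nat by lia. rewrite pw_add. pose proof (pw_pos (s-2)). change (pw 2) with 4. lia. }
  pose proof (Nat2Z.is_nonneg m).
  destruct Hd as [[c Hc]|[c Hc]].
  - destruct (Z.Even_or_Odd c) as [[c' Hc']|[c' Hc']].
    + exfalso. assert (S s <= s)%nat; [|lia]. apply Hmax; [lia|]. left. exists c'. rewrite pw_S. lia.
    + exists (Z.to_nat c). assert (0 <= c') by nia. split.
      * apply Nat.odd_spec. exists (Z.to_nat c'). lia.
      * right. apply Nat2Z.inj. rewrite Nat2Z.inj_add, Nat2Z.inj_mul, pw_nat, Z2Nat.id by lia. lia.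
  - destruct (Z.Even_or_Odd c) as [[c' Hc']|[c' Hc']].
    + exfalso. assert (S s <= s)%nat; [|lia]. apply Hmax; [lia|]. right. exists c'. rewrite pw_S. lia.
    + exists (Z.to_nat c). assert (0 <= c') by nia. split.
      * apply Nat.odd_spec. exists (Z.to_nat c'). lia.
      * left. apply Nat2Z.inj. rewrite Nat2Z.inj_add, Nat2Z.inj_mul, pw_nat, Z2Nat.id by lia. lia.
Qed.

Fixpoint sumZ (f : nat -> Z) (n : nat) : Z :=
  match n with O => 0 | S n' => f O + sumZ (fun k => f (S k)) n' end.

Lemma sumZ_last f n : sumZ f (S n) = sumZ f n + f n.
Proof. revert f. induction n; intros f. simpl. ring.
  change (sumZ f (S (S n))) with (f O + sumZ (fun k => f (S k)) (S n)).
  rewrite IHn. simpl. ring. Qed.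
Lemma sumZ_ext f g n : (forall k, (k < n)%nat -> f k = g k) -> sumZ f n = sumZ g n.
Proof. revert f g. induction n; intros f g H. reflexivity. simpl. rewrite H by lia.
  f_equal. apply IHn. intros. apply H. lia. Qed.
Lemma sumZ_add f g n : sumZ (fun k => f k + g k) n = sumZ f n + sumZ g n.
Proof. revert f g. induction n; intros; simpl. ring. rewrite IHn. ring. Qed.
Lemma sumZ_scal c f n : sumZ (fun k => c * f k) n = c * sumZ f n.
Proof. revert f. induction n; intros; simpl. ring. rewrite IHn. ring. Qed.
Lemma sumZ_extend f n j : (forall k, (n <= k)%nat -> f k = 0) -> sumZ f (n + j) = sumZ f n.
Proof. intros H. induction j. rewrite Nat.add_0_r. auto.
  rewrite Nat.add_succ_r, sumZ_last, IHj, H by lia. ring. Qed.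
Lemma fold_sumZ f a n : fold_right (fun k acc => f k + acc) 0 (seq a n) = sumZ (fun k => f (a + k)%nat) n.
Proof. revert a. induction n; intros a. reflexivity. simpl. rewrite IHn. rewrite Nat.add_0_r.
  f_equal. apply sumZ_ext. intros. f_equal. lia. Qed.

Lemma binom_0 n : binom n 0 = 1%nat. Proof. destruct n; reflexivity. Qed.
Lemma binom_gt n k : (n < k)%nat -> binom n k = 0%nat.
Proof. revert k. induction n; intros k H. destruct k; [lia|reflexivity].
  destruct k; [lia|]. simpl. rewrite !IHn by lia. reflexivity. Qed.
Lemma binom_nn n : binom n n = 1%nat.
Proof. induction n. reflexivity. simpl. rewrite IHn, binom_gt by lia. reflexivity. Qed.
Lemma absorb n k : (S k * binom (S n) (S k) = S n * binom n k)%nat.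
Proof. revert k. induction n; intros k.
  - destruct k. reflexivity. rewrite !binom_gt by lia. lia.
  - change (binom (S (S n)) (S k)) with (binom (S n) k + binom (S n) (S k))%nat.
    destruct k.
    + rewrite binom_0. specialize (IHn 0%nat). rewrite binom_0 in IHn. lia.
    + pose proof (IHn k) as H1. pose proof (IHn (S k)) as H2.
      change (binom (S n) (S k)) with (binom n k + binom n (S k))%nat.
      change (binom (S n) (S (S k))) with (binom n (S k) + binom n (S (S k)))%nat in H2.
      change (binom (S n) (S k)) with (binom n k + binom n (S k))%nat in H1.
      change (binom (S n) (S (S k))) with (binom n (S k) + binom n (S (S k)))%nat.
      rewrite Nat.mul_add_distr_l, H2.
      replace (S (S k) * (binom n k + binom n (S k)))%nat with (S k * (binom n k + binom n (S k)) + (binom n k + binom n (S k)))%nat by ring.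
      rewrite H1. ring. Qed.

Definition ee (N k : nat) : nat :=
  (binom N k + match k with O => O | S k' => binom (N - 1) k' end)%nat.
Definition EE (m k : nat) : nat := if (2 * k <=? m)%nat then ee (m - k) k else O.
Definition sg (k : nat) : Z := (-1) ^ Z.of_nat k.
Lemma sg_S k : sg (S k) = - sg k.
Proof. unfold sg. rewrite Nat2Z.inj_succ, Z.pow_succ_r by lia. ring. Qed.

Lemma ee_rec N k : (1 <= N)%nat -> ee (S N) (S k) = (ee N (S k) + ee N k)%nat.
Proof. intros H. destruct N as [|n]; [lia|]. unfold ee.
  change (binom (S (S n)) (S k)) with (binom (S n) k + binom (S n) (S k))%nat.
  replace (S (S n) - 1)%nat with (S n) by lia. replace (S n - 1)%nat with n by lia.
  destruct k. rewrite !binom_0. lia.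
  change (binom (S n) (S k)) with (binom n k + binom n (S k))%nat. lia. Qed.

Lemma EE_rec m k : (1 <= m)%nat -> EE (m + 2) (S k) = (EE (m + 1) (S k) + EE m k)%nat.
Proof. intros Hm. unfold EE.
  destruct (Nat.leb_spec (2 * S k) (m + 2)) as [H1|H1].
  - destruct (Nat.leb_spec (2 * k) m) as [H3|H3]; [|lia].
    replace (m + 2 - S k)%nat with (S (m - k)) by lia.
    rewrite ee_rec by lia.
    destruct (Nat.leb_spec (2 * S k) (m + 1)) as [H2|H2].
    + replace (m + 1 - S k)%nat with (m - k)%nat by lia. lia.
    + assert (E : m = (2 * k)%nat) by lia. subst m. replace (2 * k - k)%nat with k by lia.
      unfold ee. rewrite binom_gt by lia. destruct k; [lia|]. replace (S k - 1)%nat with k by lia.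
      rewrite (binom_gt k (S k)) by lia. lia.
  - destruct (Nat.leb_spec (2 * S k) (m + 1)) as [H2|H2]; [lia|].
    destruct (Nat.leb_spec (2 * k) m) as [H3|H3]; [lia|]. lia. Qed.

Definition LL (m : nat) (y : Z) : Z :=
  sumZ (fun k => sg k * Z.of_nat (EE m k) * y ^ Z.of_nat (m - 2 * k)) (S m).

Lemma EE_zero m k : (m < 2 * k)%nat -> EE m k = O.
Proof. intros H. unfold EE. destruct (Nat.leb_spec (2 * k) m); [lia|auto]. Qed.
Lemma EE_0 m : EE m 0 = 1%nat.
Proof. unfold EE, ee. simpl. rewrite Nat.sub_0_r, binom_0. reflexivity. Qed.

Lemma sumZ_S f n : sumZ f (S n) = f O + sumZ (fun k => f (S k)) n.
Proof. reflexivity. Qed.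

Lemma LL_rec m y : (1 <= m)%nat -> LL (m + 2) y = y * LL (m + 1) y - LL m y.
Proof. intros Hm. unfold LL.
  replace (S (m + 2)) with (S (S (S m))) by lia. replace (S (m + 1)) with (S (S m)) by lia.
  set (G1 := fun k => sg k * Z.of_nat (EE (m + 1) (S k)) * y ^ Z.of_nat (m - 2 * k)).
  set (G2 := fun k => sg k * Z.of_nat (EE m k) * y ^ Z.of_nat (m - 2 * k)).
  assert (A1 : sumZ (fun k => sg k * Z.of_nat (EE (m + 2) k) * y ^ Z.of_nat (m + 2 - 2 * k)) (S (S (S m)))
     = y ^ Z.of_nat (m + 2) - sumZ G1 (S (S m)) - sumZ G2 (S (S m))).
  { rewrite sumZ_S. rewrite EE_0. rewrite Nat.mul_0_r, Nat.sub_0_r.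
    rewrite (sumZ_ext _ (fun k => -1 * G1 k + -1 * G2 k)).
    - rewrite sumZ_add, !sumZ_scal. change (sg 0) with 1. ring.
    - intros k _. unfold G1, G2. rewrite sg_S, EE_rec by lia. rewrite Nat2Z.inj_add.
      replace (m + 2 - 2 * S k)%nat with (m - 2 * k)%nat by lia. ring. }
  rewrite A1.
  assert (A2 : sumZ G2 (S (S m)) = sumZ G2 (S m)).
  { rewrite sumZ_last. unfold G2 at 2. rewrite EE_zero by lia. ring. }
  assert (A3 : sumZ G1 (S (S m)) = sumZ G1 (S m)).
  { rewrite sumZ_last. unfold G1 at 2. rewrite EE_zero by lia. ring. }
  assert (A4 : y * sumZ (fun k => sg k * Z.of_nat (EE (m + 1) k) * y ^ Z.of_nat (m + 1 - 2 * k)) (S (S m))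
     = y ^ Z.of_nat (m + 2) - sumZ G1 (S m)).
  { rewrite sumZ_S. rewrite EE_0. rewrite Nat.mul_0_r, Nat.sub_0_r.
    rewrite Z.mul_add_distr_l, <- sumZ_scal.
    rewrite (sumZ_ext _ (fun k => -1 * G1 k)).
    - rewrite sumZ_scal. change (sg 0) with 1.
      replace (Z.of_nat (m + 2)) with (Z.succ (Z.of_nat (m + 1))) by lia.
      rewrite Z.pow_succ_r by lia. ring.
    - intros k _. unfold G1. rewrite sg_S.
      destruct (Nat.leb_spec (2 * S k) (m + 1)) as [H|H].
      + replace (Z.of_nat (m - 2 * k)) with (Z.succ (Z.of_nat (m + 1 - 2 * S k))) by lia.
        rewrite Z.pow_succ_r by lia. ring.
      + rewrite EE_zero by lia. ring. }
  rewrite A2, A3, A4. unfold G2. ring. Qed.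

Lemma LL_1 y : LL 1 y = y.
Proof. unfold LL. rewrite !sumZ_S. simpl sumZ. rewrite EE_0. rewrite (EE_zero 1 1) by lia.
  change (sg 0) with 1. simpl (Z.of_nat _). ring. Qed.
Lemma LL_2 y : LL 2 y = y * y - 2.
Proof. unfold LL. rewrite !sumZ_S. simpl sumZ. rewrite EE_0. rewrite (EE_zero 2 2) by lia.
  replace (EE 2 1) with 2%nat by reflexivity.
  change (sg 0) with 1. change (sg 1) with (-1). simpl (Z.of_nat _). ring. Qed.

Lemma Tc_LL m x : (1 <= m)%nat -> 2 * Tc m x = LL m (2 * x).
Proof. intros Hm. destruct m as [|m]; [lia|].
  assert (H : forall n, 2 * Tc (S n) x = LL (S n) (2 * x) /\ 2 * Tc (S (S n)) x = LL (S (S n)) (2 * x)).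
  { induction n.
    - rewrite LL_1, LL_2. rewrite !Tc_S, !Vc_S, Tc_0, Vc_0. split; ring.
    - destruct IHn as [H1 H2]. split; auto.
      replace (S (S (S n))) with (S n + 2)%nat by lia. rewrite LL_rec by lia.
      replace (S n + 1)%nat with (S (S n)) by lia. rewrite <- H1, <- H2.
      replace (S n + 2)%nat with (S (S (S n))) by lia. rewrite Tc_rec. ring. }
  apply H. Qed.

Lemma absorb2 m k : (1 <= m)%nat -> (2 * k <= m)%nat ->
  (m * binom (m - k) k = (m - k) * ee (m - k) k)%nat.
Proof. intros H1 H2. unfold ee. destruct k.
  - rewrite Nat.sub_0_r. lia.
  - remember (m - S k)%nat as N. destruct N as [|n]; [lia|].
    replace (S n - 1)%nat with n by lia.
    replace m with (S n + S k)%nat at 1 by lia.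
    pose proof (absorb n k). nia. Qed.

Lemma term_id m k x : (1 <= m)%nat -> (2 * k <= m)%nat ->
  2 * (cheb_coef m k * x ^ Z.of_nat (m - 2 * k)) = sg k * Z.of_nat (EE m k) * (2 * x) ^ Z.of_nat (m - 2 * k).
Proof. intros H1 H2. unfold cheb_coef, EE.
  destruct (Nat.leb_spec (2 * k) m) as [_|H]; [|lia].
  pose proof (absorb2 m k H1 H2) as Hab.
  assert (Hnum : Z.of_nat m * Z.of_nat (binom (m - k) k) = Z.of_nat (m - k) * Z.of_nat (ee (m - k) k))
    by (rewrite <- !Nat2Z.inj_mul; f_equal; exact Hab).
  rewrite Hnum. rewrite Z.pow_mul_l. fold (sg k).
  assert (Hmk : 0 < Z.of_nat (m - k)) by lia.
  destruct (Nat.eq_dec (m - 2 * k) 0) as [E|E].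
  - rewrite E. change (pw 0) with 1. simpl (Z.of_nat 0).
    assert (He : ee (m - k) k = 2%nat).
    { replace (m - k)%nat with k by lia. unfold ee. destruct k; [lia|]. rewrite binom_nn.
      replace (S k - 1)%nat with k by lia. rewrite binom_nn. reflexivity. }
    rewrite He. change (Z.of_nat 2) with 2.
    replace (Z.of_nat (m - k) * 2 * 1) with (1 * (2 * Z.of_nat (m - k))) by ring.
    rewrite Z.div_mul by lia. ring.
  - assert (Hp : pw (m - 2 * k) = 2 * pw (m - 2 * k - 1)).
    { rewrite <- pw_S. f_equal. lia. }
    change (2 ^ Z.of_nat (m - 2 * k)) with (pw (m - 2 * k)). rewrite Hp.
    replace (Z.of_nat (m - k) * Z.of_nat (ee (m - k) k) * (2 * pw (m - 2 * k - 1)))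
      with (Z.of_nat (ee (m - k) k) * pw (m - 2 * k - 1) * (2 * Z.of_nat (m - k))) by ring.
    rewrite Z.div_mul by lia. ring. Qed.

Definition cheb_int (m : nat) (x : Z) : Z :=
  fold_right (fun k acc => cheb_coef m k * x ^ Z.of_nat (m - 2 * k) + acc) 0 (seq 0 (S (Nat.div2 m))).

Lemma cheb_int_Tc m x : (1 <= m)%nat -> cheb_int m x = Tc m x.
Proof. intros Hm.
  assert (H : 2 * cheb_int m x = 2 * Tc m x); [|lia].
  rewrite Tc_LL by auto. unfold cheb_int. rewrite (fold_sumZ (fun k => cheb_coef m k * x ^ Z.of_nat (m - 2 * k))).
  rewrite <- sumZ_scal. simpl (0 + _)%nat.
  pose proof (Nat.div2_odd m) as Hd.
  assert (Hb : (Nat.b2n (Nat.odd m) <= 1)%nat) by (destruct (Nat.odd m); simpl; lia).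
  rewrite (sumZ_ext _ (fun k => sg k * Z.of_nat (EE m k) * (2 * x) ^ Z.of_nat (m - 2 * k))).
  - unfold LL. replace (S m) with (S (Nat.div2 m) + (m - Nat.div2 m))%nat by lia.
    symmetry. apply sumZ_extend. intros k Hk. rewrite EE_zero by lia. ring.
  - intros k Hk. apply term_id; auto. lia. Qed.

Lemma pw_nz n : pw n <> 0. Proof. pose proof (pw_pos n). lia. Qed.

Lemma Z2pow_eval X j N : Z2pow X j N = (X N) ^ Z.of_nat j mod pw N.
Proof. induction j.
  - reflexivity.
  - simpl Z2pow. unfold Z2mul. rewrite IHj. rewrite Zmult_mod_idemp_r.
    rewrite Nat2Z.inj_succ, Z.pow_succ_r by lia. reflexivity. Qed.

Lemma fold_eval (F : nat -> Z2) (G : nat -> Z) N l : (forall k, F k N = G k mod pw N) ->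
  fold_right (fun k acc => Z2add (F k) acc) (Z2c 0) l N = fold_right (fun k acc => G k + acc) 0 l mod pw N.
Proof. intros H. induction l.
  - reflexivity.
  - simpl fold_right. unfold Z2add at 1. rewrite H. rewrite IHl.
    rewrite Zplus_mod_idemp_r, Zplus_mod_idemp_l. reflexivity. Qed.

Lemma cheb_eval m X N : cheb m X N = cheb_int m (X N) mod pw N.
Proof. unfold cheb, cheb_int. apply fold_eval. intros k.
  unfold Z2mul. rewrite Z2pow_eval. unfold Z2c.
  rewrite Zmult_mod_idemp_r, Zmult_mod_idemp_l. reflexivity. Qed.

Lemma Z2_range x n : is_Z2 x -> 0 <= x n < pw n.
Proof. intros H. apply H. Qed.

Lemma compat x j n : is_Z2 x -> (j <= n)%nat -> x n mod pw j = x j.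
Proof. intros Hx Hjn. induction Hjn.
  - apply Z.mod_small. apply Hx.
  - rewrite (Zmod_div_mod (pw j) (pw m)); [| apply pw_pos | apply pw_pos | apply pw_le_div; auto].
    destruct (Hx m) as [_ H]. rewrite H. auto. Qed.

Lemma compat_div x j n : is_Z2 x -> (j <= n)%nat -> (pw j | x n - x j).
Proof. intros Hx H. apply div_of_mod. apply pw_nz. rewrite compat by auto.
  rewrite Z.mod_small by (apply Hx). reflexivity. Qed.

Lemma Tc_cong m p a b : (p | a - b) -> (p | Tc m a - Tc m b).
Proof. intros H. apply (Tay_cong (Tc m) (dTc m) (Tay_T m)). auto. Qed.

Lemma cheb_T m X N : (1 <= m)%nat -> cheb m X N = Tc m (X N) mod pw N.
Proof. intros Hm. rewrite cheb_eval, cheb_int_Tc; auto. Qed.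

Lemma iter_eval m X N k : (1 <= m)%nat -> is_Z2 X -> Defs.iter k (cheb m) X N = Nat.iter k (Tc m) (X N) mod pw N.
Proof. intros Hm HX. unfold Defs.iter. induction k.
  - rewrite !iter_0. rewrite Z.mod_small; auto. apply HX.
  - rewrite !iter_S. rewrite cheb_T by auto. rewrite IHk. apply mod_of_div. apply Tc_cong.
    apply div_of_mod; [apply pw_nz|]. rewrite Z.mod_mod by apply pw_nz. reflexivity.
Qed.

Lemma cheb_Z2 m X : (1 <= m)%nat -> is_Z2 X -> is_Z2 (cheb m X).
Proof. intros Hm HX n. rewrite !cheb_T by auto. split.
  - apply Z.mod_pos_bound. apply pw_pos.
  - rewrite <- Zmod_div_mod; [| apply pw_pos | apply pw_pos | apply pw_le_div; lia].
    apply mod_of_div. apply Tc_cong. apply compat_div; auto. Qed.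

Lemma cheb_const m c n : (1 <= m)%nat -> cheb m (Z2c c) n = Tc m c mod pw n.
Proof. intros Hm. rewrite cheb_T by auto. unfold Z2c. apply mod_of_div. apply Tc_cong.
  apply div_of_mod; [apply pw_nz|]. rewrite Z.mod_mod by apply pw_nz. reflexivity. Qed.

Lemma coset_char a K x : is_Z2 x -> (in_coset a K x <-> x K = a mod pw K).
Proof. intros Hx. pose proof (pw_pos K) as HP. split.
  - intros [y [Hy E]]. rewrite (E K). unfold Z2add, Z2mul, Z2c. rewrite Z.mod_same by lia.
    rewrite Z.mul_0_l, Z.mod_0_l by lia. rewrite Z.add_0_r. apply Z.mod_mod. lia.
  - intros HK. set (P := pw K) in *.
    assert (Hd : forall n, (P | x (n + K)%nat - a)).
    { intros n. apply div_of_mod; [lia|]. unfold P. rewrite compat by (auto; lia). auto. }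
    set (u := fun n => (x (n + K)%nat - a) / P).
    assert (Hu : forall n, x (n + K)%nat - a = P * u n).
    { intros n. unfold u. destruct (Hd n) as [c Hc]. rewrite Hc. rewrite Z.div_mul by lia. ring. }
    exists (fun n => u n mod pw n). split.
    + intros n. split. apply Z.mod_pos_bound, pw_pos.
      rewrite <- Zmod_div_mod; [| apply pw_pos | apply pw_pos | apply pw_le_div; lia].
      apply mod_of_div.
      assert (H1 : (pw n * P | P * (u (S n) - u n))).
      { replace (P * (u (S n) - u n)) with (x (S n + K)%nat - x (n + K)%nat) by (rewrite <- ?Hu; pose proof (Hu n); pose proof (Hu (S n)); lia).
        unfold P. rewrite <- pw_add. apply compat_div; auto. lia. }
      rewrite (Z.mul_comm P) in H1. apply Z.mul_divide_cancel_r in H1; [|lia]. auto.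
    + intros n. unfold Z2add, Z2mul, Z2c.
      rewrite Zmult_mod_idemp_l, Zplus_mod_idemp_l, Zplus_mod_idemp_r.
      rewrite <- (Z.mod_small (x n) (pw n)) at 1 by apply Hx.
      apply mod_of_div. fold P.
      assert (H1 : (pw n | x (n + K)%nat - x n)) by (apply compat_div; auto; lia).
      assert (H2 : (pw n | u n mod pw n - u n)).
      { apply div_of_mod. apply pw_nz. rewrite Z.mod_mod by apply pw_nz. reflexivity. }
      replace (x n - (a + P * (u n mod pw n))) with ((x (n + K)%nat - x n) * (-1) + P * (u n mod pw n - u n) * (-1))
        by (pose proof (Hu n); lia).
      apply Z.divide_add_r; apply Z.divide_mul_l; [exact H1|]. apply Z.divide_mul_r. exact H2. Qed.

Definition inE (c : Z) (n i M : nat) (x : Z2) : Prop :=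
  x (n + M)%nat = (c + pw n * (1 + 2 * Z.of_nat i)) mod pw (n + M).
Definition inPt (c : Z) (x : Z2) : Prop := forall j, x j = c mod pw j.

Lemma mod_down a j n : (j <= n)%nat -> (a mod pw n) mod pw j = a mod pw j.
Proof. intros H. rewrite <- Zmod_div_mod; auto; try apply pw_pos. apply pw_le_div; auto. Qed.

Lemma L1 c n i M x j : is_Z2 x -> inE c n i M x -> (j <= n)%nat -> x j = c mod pw j.
Proof. intros Hx HE Hj. rewrite <- (compat x j (n + M)) by (auto; lia). rewrite HE.
  rewrite mod_down by lia. apply mod_of_div.
  replace (c + pw n * (1 + 2 * Z.of_nat i) - c) with (pw n * (1 + 2 * Z.of_nat i)) by ring.
  apply Z.divide_mul_l. apply pw_le_div; auto. Qed.

Lemma L2 c n i M x : is_Z2 x -> (1 <= M)%nat -> inE c n i M x -> x (S n) = (c + pw n) mod pw (S n).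
Proof. intros Hx HM HE. rewrite <- (compat x (S n) (n + M)) by (auto; lia). rewrite HE.
  rewrite mod_down by lia. apply mod_of_div. rewrite pw_S. exists (Z.of_nat i). ring. Qed.

Lemma L3 c n : (c + pw n) mod pw (S n) <> c mod pw (S n).
Proof. intros H. apply div_of_mod in H; [|apply pw_nz]. rewrite pw_S in H.
  replace (c + pw n - c) with (pw n) in H by ring. destruct H as [k Hk].
  pose proof (pw_pos n).
  assert (E : pw n * (2 * k - 1) = 0) by lia. apply Z.mul_eq_0 in E. lia. Qed.

Lemma E_range c n i M : -1 <= c <= 1 -> (1 <= n)%nat -> (1 <= M)%nat -> (i < 2 ^ (M - 1))%nat ->
  0 <= c + pw n * (1 + 2 * Z.of_nat i) < pw (n + M).
Proof. intros Hc Hn HM Hi. apply inj_lt in Hi. rewrite pw_nat in Hi.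
  rewrite pw_add.
  assert (EM : pw M = 2 * pw (M - 1)) by (rewrite <- pw_S; f_equal; lia).
  assert (En : pw n = 2 * pw (n - 1)) by (rewrite <- pw_S; f_equal; lia).
  rewrite EM, En. pose proof (pw_pos (n - 1)). pose proof (pw_pos (M - 1)). nia. Qed.

Lemma E_uniq c n i i' M x : -1 <= c <= 1 -> (1 <= n)%nat -> (1 <= M)%nat ->
  (i < 2 ^ (M - 1))%nat -> (i' < 2 ^ (M - 1))%nat -> inE c n i M x -> inE c n i' M x -> i = i'.
Proof. intros Hc Hn HM Hi Hi' H1 H2. unfold inE in *. rewrite H1 in H2.
  rewrite !Z.mod_small in H2 by (apply E_range; auto).
  pose proof (pw_pos n). assert (Z.of_nat i = Z.of_nat i') by nia. lia. Qed.

Lemma step_lemma (P : nat -> Prop) : P O -> (exists j, ~ P j) -> exists n, P n /\ ~ P (S n).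
Proof. intros H0 [j Hj]. induction j. contradiction.
  destruct (classic (P j)) as [Hp|Hp]. exists j. auto. auto. Qed.

Lemma E_exist c L M x : is_Z2 x -> -1 <= c <= 1 -> (1 <= L)%nat -> (1 <= M)%nat ->
  x L = c mod pw L ->
  inPt c x \/ exists n i, (L <= n)%nat /\ (i < 2 ^ (M - 1))%nat /\ inE c n i M x.
Proof. intros Hx Hc HL HM HxL.
  destruct (classic (inPt c x)) as [H|H]; [left; auto|right].
  assert (Hle : forall j, (j <= L)%nat -> x j = c mod pw j).
  { intros j Hj. rewrite <- (compat x j L) by auto. rewrite HxL. apply mod_down; auto. }
  destruct (step_lemma (fun j => x j = c mod pw j)) as [n [Hn HSn]].
  - apply Hle. lia.
  - apply not_all_ex_not. exact H.
  - assert (HnL : (L <= n)%nat).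
    { destruct (Nat.le_gt_cases L n); auto. exfalso. apply HSn. apply Hle. lia. }
    set (z := x (n + M)%nat).
    assert (Hz1 : (pw n | z - c)).
    { apply div_of_mod; [apply pw_nz|]. unfold z. rewrite compat by (auto; lia). auto. }
    destruct Hz1 as [w Hw].
    destruct (Z.Even_or_Odd w) as [[w' Hw']|[w' Hw']].
    + exfalso. apply HSn. rewrite <- (compat x (S n) (n + M)) by (auto; lia). fold z.
      apply mod_of_div. rewrite pw_S. exists w'. lia.
    + assert (Hzr : 0 <= z < pw (n + M)) by (apply Hx).
      rewrite pw_add in Hzr.
      assert (EM : pw M = 2 * pw (M - 1)) by (rewrite <- pw_S; f_equal; lia). rewrite EM in Hzr.
      assert (Hpn : 2 <= pw n).
      { replace n with (S (n - 1)) by lia. rewrite pw_S. pose proof (pw_pos (n - 1)). lia. }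
      pose proof (pw_pos (M - 1)).
      assert (Hw0 : 0 <= w') by nia.
      assert (Hw1 : w' < pw (M - 1)) by nia.
      exists n, (Z.to_nat w'). split; auto. split.
      * apply Nat2Z.inj_lt. rewrite Z2Nat.id by lia. rewrite pw_nat. auto.
      * unfold inE. fold z. rewrite Z2Nat.id by lia. rewrite <- (Z.mod_small z (pw (n + M))) by (apply Hx).
        f_equal. lia. Qed.

Lemma odd_prod a b : (exists u, a = 2 * u + 1) -> (exists v, b = 2 * v + 1) -> exists w, a * b = 2 * w + 1.
Proof. intros [u Hu] [v Hv]. subst. exists (2 * u * v + u + v). ring. Qed.

Lemma coset_dyn m a K : (1 <= m)%nat -> Nat.odd m = true -> (3 <= K)%nat ->
  (exists o, Tc m a - a = pw K * (2 * o + 1)) ->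
  invariant (cheb m) (in_coset a K) /\ minimal_on (cheb m) (in_coset a K).
Proof. intros Hm Hodd HK Ha.
  destruct (piece_dyn (Tc m) (dTc m) (Tay_T m) (dTc_one4 m Hodd) a K HK Ha) as [Hinv Hmin].
  split.
  - intros x Hx Hin. apply coset_char in Hin; auto. apply coset_char; [apply cheb_Z2; auto|].
    rewrite cheb_T by auto. apply mod_of_div. apply Hinv. apply div_of_mod; [apply pw_nz|].
    rewrite Hin. rewrite Z.mod_mod by apply pw_nz. reflexivity.
  - intros x y Hx Hy Hinx Hiny N.
    apply coset_char in Hinx; auto. apply coset_char in Hiny; auto.
    assert (HX : (pw K | x (N + K)%nat - a)).
    { apply div_of_mod; [apply pw_nz|]. rewrite compat by (auto; lia). auto. }
    assert (HY : (pw K | y (N + K)%nat - a)).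
    { apply div_of_mod; [apply pw_nz|]. rewrite compat by (auto; lia). auto. }
    destruct (Hmin _ _ N HX HY) as [k Hk]. exists k.
    rewrite iter_eval by auto.
    rewrite <- (compat y N (N + K)) by (auto; lia).
    apply mod_of_div.
    assert (H1 : (pw N | Nat.iter k (Tc m) (x (N + K)%nat) - Nat.iter k (Tc m) (x N))).
    { apply (iter_cong _ _ (Tay_T m)). apply compat_div; auto; lia. }
    replace (Nat.iter k (Tc m) (x N) - y (N + K)%nat) with
      ((Nat.iter k (Tc m) (x (N + K)%nat) - y (N + K)%nat) - (Nat.iter k (Tc m) (x (N + K)%nat) - Nat.iter k (Tc m) (x N))) by ring.
    apply Z.divide_sub_r; auto. Qed.

Lemma pw_split n : (1 <= n)%nat -> pw n = 2 * pw (n - 1).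
Proof. intros H. rewrite <- pw_S. f_equal. lia. Qed.

Lemma Ha_E1 m s q n i : (2 <= s)%nat -> Nat.odd q = true -> (m = 2 ^ s * q + 1 \/ m + 1 = 2 ^ s * q)%nat ->
  (1 <= n)%nat -> exists o, Tc m (pw n * (1 + 2 * Z.of_nat i)) - pw n * (1 + 2 * Z.of_nat i) = pw (n + s) * (2 * o + 1).
Proof. intros Hs Hq Hm Hn. set (u := 1 + 2 * Z.of_nat i). set (a := pw n * u).
  destruct (key_val m s q Hs Hq Hm a) as [w Hw]. rewrite Hw.
  assert (Ho : exists o, u * (a * a - 1) * (2 * w + 1) = 2 * o + 1).
  { apply odd_prod; [apply odd_prod|]. exists (Z.of_nat i); unfold u; ring.
    exists (2 * pw (n - 1) * pw (n - 1) * u * u - 1). unfold a. rewrite (pw_split n) by auto. ring.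
    exists w; reflexivity. }
  destruct Ho as [o Ho]. exists o. rewrite <- Ho. rewrite pw_add. unfold a. ring. Qed.

Lemma Ha_E23 m s q n i e : (2 <= s)%nat -> Nat.odd q = true -> (m = 2 ^ s * q + 1 \/ m + 1 = 2 ^ s * q)%nat ->
  (2 <= n)%nat -> (e = 1 \/ e = -1) ->
  exists o, Tc m (e + pw n * (1 + 2 * Z.of_nat i)) - (e + pw n * (1 + 2 * Z.of_nat i)) = pw (n + s + 1) * (2 * o + 1).
Proof. intros Hs Hq Hm Hn He. set (u := 1 + 2 * Z.of_nat i). set (a := e + pw n * u).
  destruct (key_val m s q Hs Hq Hm a) as [w Hw]. rewrite Hw.
  assert (Epn : pw n = 4 * pw (n - 2)).
  { rewrite (pw_split n), (pw_split (n - 1)) by lia. replace (n - 1 - 1)%nat with (n - 2)%nat by lia. ring. }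
  assert (Ho : exists o, a * u * (e + 2 * pw (n - 2) * u) * (2 * w + 1) = 2 * o + 1).
  { apply odd_prod; [apply odd_prod; [apply odd_prod|]|].
    - destruct He as [He|He]; subst e.
      + exists (2 * pw (n - 2) * u). unfold a. rewrite Epn. ring.
      + exists (2 * pw (n - 2) * u - 1). unfold a. rewrite Epn. ring.
    - exists (Z.of_nat i); unfold u; ring.
    - destruct He as [He|He]; subst e; [exists (pw (n - 2) * u)|exists (pw (n - 2) * u - 1)]; ring.
    - exists w; reflexivity. }
  destruct Ho as [o Ho]. exists o. rewrite <- Ho.
  replace (n + s + 1)%nat with (n + (s + 1))%nat by lia. rewrite !pw_add.
  change (pw 1) with 2. unfold a. rewrite Epn.
  destruct He as [He|He]; subst e; ring. Qed.

Lemma inE1 s n i x : is_Z2 x -> (in_piece s (E1 n i) x <-> inE 0 n i s x).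
Proof. intros Hx. simpl. rewrite coset_char by auto. unfold inE. rewrite Z.add_0_l. tauto. Qed.
Lemma inE2 s n i x : is_Z2 x -> (in_piece s (E2 n i) x <-> inE 1 n i (s + 1) x).
Proof. intros Hx. simpl. rewrite coset_char by auto. unfold inE. rewrite Nat.add_assoc. tauto. Qed.
Lemma inE3 s n i x : is_Z2 x -> (in_piece s (E3 n i) x <-> inE (-1) n i (s + 1) x).
Proof. intros Hx. simpl. rewrite coset_char by auto. unfold inE. rewrite Nat.add_assoc. tauto. Qed.

Definition cen (p : piece) : Z :=
  match p with Pt0 | E1 _ _ => 0 | Pt1 | E2 _ _ => 1 | PtM1 | E3 _ _ => -1 end.

Lemma piece_center s p x : is_Z2 x -> (2 <= s)%nat -> piece_valid s p -> in_piece s p x ->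
  (cen p = 0 /\ x 1%nat = 0) \/ (cen p = 1 /\ x 2%nat = 1) \/ (cen p = -1 /\ x 2%nat = 3).
Proof. intros Hx Hs Hv Hin. destruct p; simpl in Hv.
  - left. split; [reflexivity|apply Hin].
  - right; left. split; [reflexivity|apply Hin].
  - right; right. split; [reflexivity|apply Hin].
  - left. split; [reflexivity|]. apply inE1 in Hin; auto. rewrite (L1 _ _ _ _ _ 1 Hx Hin) by lia. reflexivity.
  - right; left. split; [reflexivity|]. apply inE2 in Hin; auto. rewrite (L1 _ _ _ _ _ 2 Hx Hin) by lia. reflexivity.
  - right; right. split; [reflexivity|]. apply inE3 in Hin; auto. rewrite (L1 _ _ _ _ _ 2 Hx Hin) by lia. reflexivity. Qed.

Lemma cen_eq s p q x : is_Z2 x -> (2 <= s)%nat -> piece_valid s p -> piece_valid s q ->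
  in_piece s p x -> in_piece s q x -> cen p = cen q.
Proof. intros Hx Hs Hp Hq H1 H2.
  pose proof (compat x 1 2 Hx ltac:(lia)) as Hc.
  destruct (piece_center s p x Hx Hs Hp H1) as [[A B]|[[A B]|[A B]]];
  destruct (piece_center s q x Hx Hs Hq H2) as [[C D]|[[C D]|[C D]]];
  rewrite A, C; auto; exfalso;
  rewrite ?B, ?D in Hc; vm_compute in Hc; try discriminate; congruence. Qed.

Lemma PtE c n i M x : is_Z2 x -> (1 <= M)%nat -> inPt c x -> inE c n i M x -> False.
Proof. intros Hx HM H1 H2. apply (L3 c n). rewrite <- (L2 c n i M x Hx HM H2). apply H1. Qed.

Lemma EEu c n n' i i' M x : is_Z2 x -> -1 <= c <= 1 -> (1 <= n)%nat -> (1 <= n')%nat -> (1 <= M)%nat ->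
  (i < 2 ^ (M - 1))%nat -> (i' < 2 ^ (M - 1))%nat -> inE c n i M x -> inE c n' i' M x -> n = n' /\ i = i'.
Proof. intros Hx Hc Hn Hn' HM Hi Hi' H1 H2.
  destruct (Nat.lt_total n n') as [H|[H|H]].
  - exfalso. apply (L3 c n). rewrite <- (L2 c n i M x Hx HM H1). apply (L1 c n' i' M x); auto; lia.
  - subst n'. split; auto. apply (E_uniq c n i i' M x); auto.
  - exfalso. apply (L3 c n'). rewrite <- (L2 c n' i' M x Hx HM H2). apply (L1 c n i M x); auto; lia. Qed.

Lemma piece_uniq s p q x : is_Z2 x -> (2 <= s)%nat -> piece_valid s p -> piece_valid s q ->
  in_piece s p x -> in_piece s q x -> q = p.
Proof. intros Hx Hs Hp Hq H1 H2.
  pose proof (cen_eq s p q x Hx Hs Hp Hq H1 H2) as Hc.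
  destruct p; destruct q; simpl in Hc; try discriminate; auto; simpl in Hp, Hq;
  try rewrite inE1 in * by auto; try rewrite inE2 in * by auto; try rewrite inE3 in * by auto;
  try (exfalso; eapply PtE; [exact Hx| |exact H1|exact H2]; lia);
  try (exfalso; eapply PtE; [exact Hx| |exact H2|exact H1]; lia).
  - destruct (EEu 0 n n0 i i0 s x) as [E1' E2']; auto; try lia; subst; auto.
  - destruct (EEu 1 n n0 i i0 (s + 1) x) as [E1' E2']; auto; try lia;
     try (replace (s + 1 - 1)%nat with s by lia; lia); subst; auto.
  - destruct (EEu (-1) n n0 i i0 (s + 1) x) as [E1' E2']; auto; try lia;
     try (replace (s + 1 - 1)%nat with s by lia; lia); subst; auto.
Qed.

Lemma piece_exist s x : is_Z2 x -> (2 <= s)%nat -> exists p, piece_valid s p /\ in_piece s p x.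
Proof. intros Hx Hs.
  pose proof (Z2_range x 1 Hx) as R1. pose proof (Z2_range x 2 Hx) as R2.
  change (pw 1) with 2 in R1. change (pw 2) with 4 in R2.
  pose proof (compat x 1 2 Hx ltac:(lia)) as Hc. change (pw 1) with 2 in Hc.
  assert (H1 : x 1%nat = 0 \/ x 1%nat = 1) by lia.
  destruct H1 as [H1|H1].
  - destruct (E_exist 0 1 s x Hx ltac:(lia) ltac:(lia) ltac:(lia) ltac:(rewrite H1; reflexivity))
      as [H|[n [i [Hn [Hi HE]]]]].
    + exists Pt0. split; [exact I|exact H].
    + exists (E1 n i). split; [simpl; lia|]. apply inE1; auto.
  - assert (H2 : x 2%nat = 1 \/ x 2%nat = 3).
    { rewrite H1 in Hc. assert (x 2%nat = 0 \/ x 2%nat = 1 \/ x 2%nat = 2 \/ x 2%nat = 3) by lia.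
      destruct H as [H|[H|[H|H]]]; rewrite H in Hc; vm_compute in Hc; try discriminate; lia. }
    destruct H2 as [H2|H2].
    + destruct (E_exist 1 2 (s + 1) x Hx ltac:(lia) ltac:(lia) ltac:(lia) ltac:(rewrite H2; reflexivity))
        as [H|[n [i [Hn [Hi HE]]]]].
      * exists Pt1. split; [exact I|exact H].
      * exists (E2 n i). split; [simpl; replace (s + 1 - 1)%nat with s in Hi by lia; lia|]. apply inE2; auto.
    + destruct (E_exist (-1) 2 (s + 1) x Hx ltac:(lia) ltac:(lia) ltac:(lia) ltac:(rewrite H2; reflexivity))
        as [H|[n [i [Hn [Hi HE]]]]].
      * exists PtM1. split; [exact I|exact H].
      * exists (E3 n i). split; [simpl; replace (s + 1 - 1)%nat with s in Hi by lia; lia|]. apply inE3; auto.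
Qed.

Lemma deriv_even m : Nat.even m = true -> Z.abs (cheb_deriv_at m 1) mod 2 = 0.
Proof. intros He. apply Nat.even_spec in He. destruct He as [h Hh].
  assert (H : (2 | cheb_deriv_at m 1)).
  { unfold cheb_deriv_at. generalize (seq 0 (S (Nat.div2 m))). intros l. induction l.
    - exists 0. reflexivity.
    - simpl fold_right. apply Z.divide_add_r; auto.
      apply Z.divide_mul_l. apply Z.divide_mul_r.
      exists (Z.of_nat (h - a)). lia. }
  apply Z.mod_divide; [lia|]. apply Z.divide_abs_r. auto. Qed.

Lemma conv_even m : (2 <= m)%nat -> Nat.even m = true -> forall y k, (1 <= k)%nat ->
  (pw k | Nat.iter k (Tc m) y - 1).
Proof. intros Hm He y k Hk. apply Nat.even_spec in He. destruct He as [h Hh].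
  induction k as [|k IH]; [lia|].
  destruct k as [|k].
  - rewrite iter_S, iter_0. subst m. destruct (Tc_even_odd h y) as [a Ha]. rewrite Ha.
    change (pw 1) with 2. exists a. ring.
  - rewrite iter_S. destruct IH as [c Hc]; [lia|].
    set (z := Nat.iter (S k) (Tc m) y) in *.
    destruct (Tay_T m 1 (c * pw (S k))) as [r Hr].
    replace z with (1 + c * pw (S k)) by lia. rewrite Hr.
    unfold dTc. destruct (Tc_at1 m) as [T1 V1]. rewrite T1, V1.
    assert (E2 : pw (S (S k)) = 4 * pw k) by (rewrite !pw_S; ring).
    assert (E1 : pw (S k) = 2 * pw k) by (rewrite !pw_S; ring).
    rewrite E2, E1.
    subst m. exists (2 * c * (Z.of_nat h * Z.of_nat h) + c * c * pw k * r).
    rewrite Nat2Z.inj_mul. change (Z.of_nat 2) with 2. ring. Qed.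

Theorem theorem2 (m : nat) (hm : (2 <= m)%nat) :
  (Nat.even m = true ->
     Z2eq (cheb m (Z2c 1)) (Z2c 1) /\
     Z.abs (cheb_deriv_at m 1) mod 2 = 0 /\
     (forall x : Z2, is_Z2 x -> converges_to (cheb m) x (Z2c 1)))
  /\
  (Nat.odd m = true -> forall s : nat, is_s m s ->
     (forall x : Z2, is_Z2 x ->
        exists p : piece, (piece_valid s p /\ in_piece s p x) /\
          forall q : piece, piece_valid s q -> in_piece s q x -> q = p)
     /\ Z2eq (cheb m (Z2c 0)) (Z2c 0)
     /\ Z2eq (cheb m (Z2c 1)) (Z2c 1)
     /\ Z2eq (cheb m (Z2c (-1))) (Z2c (-1))
     /\ (forall p : piece, piece_valid s p ->
          match p with
          | Pt0 | Pt1 | PtM1 => True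
          | _ => invariant (cheb m) (in_piece s p) /\ minimal_on (cheb m) (in_piece s p)
          end)).
Proof.
  assert (Hm1 : (1 <= m)%nat) by lia.
  assert (C1 : Z2eq (cheb m (Z2c 1)) (Z2c 1)).
  { intros n. rewrite cheb_const by auto. destruct (Tc_at1 m) as [T1 _]. rewrite T1. reflexivity. }
  split.
  - intros He. split; [exact C1|]. split; [apply deriv_even; auto|].
    intros x Hx N. exists (S N). intros k Hk. rewrite iter_eval by auto. unfold Z2c.
    apply mod_of_div. eapply Z.divide_trans; [apply pw_le_div; exact (Nat.le_trans _ _ _ (Nat.le_succ_diag_r N) Hk)|].
    apply conv_even; auto; lia.
  - intros Ho s Hs.
    assert (Hs2 : (2 <= s)%nat) by (destruct Hs; auto).
    destruct (is_s_form m s Hs) as [q [Hq Hmq]].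
    assert (Hj : exists j, m = (2 * j + 1)%nat).
    { apply Nat.odd_spec in Ho. destruct Ho as [j Hj]. exists j. lia. }
    destruct Hj as [j Hj].
    split; [|split; [|split; [|split]]].
    + intros x Hx. destruct (piece_exist s x Hx Hs2) as [p [Hv Hin]]. exists p. split; [auto|].
      intros q' Hq' Hin'. apply (piece_uniq s p q' x); auto.
    + intros n. rewrite cheb_const by auto. rewrite Hj, Tc_odd_0. reflexivity.
    + exact C1.
    + intros n. rewrite cheb_const by auto. rewrite Hj. destruct (Tc_m1 j) as [_ H]. rewrite H. reflexivity.
    + intros p Hv. destruct p; auto; simpl in Hv; destruct Hv as [Hn Hi].
      * apply (coset_dyn m (pw n * (1 + 2 * Z.of_nat i)) (n + s)); auto; [lia|].
        apply (Ha_E1 m s q n i); auto.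
      * apply (coset_dyn m (1 + pw n * (1 + 2 * Z.of_nat i)) (n + s + 1)); auto; [lia|].
        apply (Ha_E23 m s q n i 1); auto.
      * apply (coset_dyn m (-1 + pw n * (1 + 2 * Z.of_nat i)) (n + s + 1)); auto; [lia|].
        apply (Ha_E23 m s q n i (-1)); auto.
Qed.
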